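(* Let $\phi=(\phi_i)_{i\ge1}$ and $\psi=(\psi_i)_{i\ge1}$ be sequences of real numbers with $\psi_i>-2$ for all $i\ge1$. Define polynomials $\mathcal{H}_n^{\phi,\psi}$ by $\mathcal{H}_0^{\phi,\psi}=1$ and, for $n\ge0$, $$\mathcal{H}_{n+1}^{\phi,\psi}(x)=2x\mathcal{H}_n^{\phi,\psi}(x)-(\mathcal{H}_n^{\phi,\psi})'(x)+(\phi_{n+1}+x\psi_{n+1})\mathcal{H}_n^{\phi,\psi}(x).$$ Then for every $n\ge0$ the polynomial $\mathcal{H}_n^{\phi,\psi}$ has only real and simple zeros, and the zeros of $\mathcal{H}_{n+1}^{\phi,\psi}$ interlace the zeros of $\mathcal{H}_n^{\phi,\psi}$.
   Context: $\mathcal{H}_n^{\phi,\psi}$ has degree $n$ and leading coefficient $\prod_{i=1}^n(\psi_i+2)$. Interlacing: given two finite sets $U,V$ of real numbers, $U$ (strictly) interlaces $V$ if $\min U<\min V$ and between any two consecutive elements of either of the two sets there is an element of the other; ''the zeros of $p$ interlace the zeros of $q$'' means the corresponding sets of zeros satisfy this. *)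

(* Defs.v *)
From HB Require Import structures.
From mathcomp Require Import all_boot all_order all_algebra.
From mathcomp Require Import reals.
Set Implicit Arguments. Unset Strict Implicit. Unset Printing Implicit Defensive.
Import Order.TTheory GRing.Theory Num.Theory.
Local Open Scope ring_scope.

(* The polynomials H_n^{phi,psi}; the sequences phi, psi are 1-indexed
   (index 0 is unused): H_0 = 1,
   H_{n+1} = 2x H_n - H_n' + (phi_{n+1} + x psi_{n+1}) H_n. *)
Fixpoint Hpoly (R : realType) (phi psi : nat -> R) (n : nat) : {poly R} :=
  match n with
  | 0 => 1
  | m.+1 =>
      let h := Hpoly phi psi m in
      ('X *+ 2) * h - h^`() + ((phi n)%:P + (psi n) *: 'X) * h
  end.

Definition real_simple_zeros (R : realType) (p : {poly R}) (s : seq R) : Prop :=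
  p != 0 /\ uniq s /\ p = lead_coef p *: \prod_(x <- s) ('X - x%:P).

(* U (strictly) interlaces V (finite sets of reals given as lists):
   min U < min V, and between any two consecutive elements of either
   set there is an element of the other. *)
Definition consecutive (R : realType) (U : seq R) (a b : R) : Prop :=
  a \in U /\ b \in U /\ a < b /\ (forall c, c \in U -> ~ (a < c /\ c < b)).

Definition interlaces (R : realType) (U V : seq R) : Prop :=
  (exists2 u, u \in U & forall v, v \in V -> u < v) /\
  (forall a b, consecutive U a b -> exists2 v, v \in V & a < v /\ v < b) /\
  (forall a b, consecutive V a b -> exists2 u, u \in U & a < u /\ u < b).

(* Main.v *)
From HB Require Import structures.
From mathcomp Require Import all_boot all_order all_algebra.
From mathcomp Require Import reals polyrcf ring lra zify.
Require Import Defs.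
Set Implicit Arguments. Unset Strict Implicit. Unset Printing Implicit Defensive.
Import Order.TTheory GRing.Theory Num.Theory.
Local Open Scope ring_scope.

Section S.
Variable R : realType.
Variables phi psi : nat -> R.
Hypothesis hpsi : forall i : nat, (1 <= i)%N -> -2 < psi i.
Local Notation H := (Hpoly phi psi).

Lemma Hrec n : H n.+1 = (2 + psi n.+1) *: ('X * H n) + ((phi n.+1)%:P * H n - (H n)^`()).
Proof.
rewrite /= -!mul_polyC polyCD; rewrite polyC_natr; move: ((H n)^`()) (H n) (phi n.+1)%:P (psi n.+1)%:P => d h a b; ring.
Qed.

Lemma Hhorner n x : (H n.+1).[x] = ((2 + psi n.+1) * x + phi n.+1) * (H n).[x] - (H n)^`().[x].
Proof. rewrite Hrec !(hornerD, hornerZ, hornerM, hornerX, hornerN, hornerC); ring. Qed.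

Lemma Hsize n : size (H n) = n.+1 /\ 0 < lead_coef (H n).
Proof.
elim: n => [|n [sz lc]]; first by rewrite /= size_poly1 lead_coef1.
have a0 : 0 < 2 + psi n.+1 by have := hpsi (ltn0Sn n); lra.
have Hn0 : H n != 0 by rewrite -size_poly_gt0 sz.
have szX : size ((2 + psi n.+1) *: ('X * H n)) = n.+2.
  by rewrite size_scale ?gt_eqF // mulrC size_mulX // sz.
have sz2 : (size ((phi n.+1)%:P * H n - (H n)^`())%R < n.+2)%N.
  apply: leq_ltn_trans (size_polyD _ _) _; rewrite gtn_max size_polyN.
  rewrite (leq_ltn_trans (size_polyMleq _ _)) /=; last first.
    by rewrite size_polyC sz; case: (_ != 0).
  by rewrite (leq_trans (lt_size_deriv Hn0)) // sz.
rewrite Hrec size_polyDl ?szX // lead_coefDl ?szX // lead_coefZ (mulrC 'X) lead_coefMX.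
split => //; exact: mulr_gt0.
Qed.

Lemma prod_flip (x : R) (l : seq R) :
  \prod_(y <- l) (x - y) = (-1) ^+ (size l) * \prod_(y <- l) (y - x).
Proof.
elim: l => [|y l IH]; first by rewrite !big_nil expr0 mulr1.
rewrite !big_cons IH /= exprS; move: (\prod_(y <- l) (y - x)) ((-1) ^+ size l) => P Q; clear IH; ring.
Qed.

Lemma prod_pos (l : seq R) (F : R -> R) :
  (forall y, y \in l -> 0 < F y) -> 0 < \prod_(y <- l) F y.
Proof. by move=> h; rewrite big_seq; apply: prodr_gt0. Qed.

Definition Good n (s : seq R) :=
  [/\ size s = n, sorted <%R s & H n = lead_coef (H n) *: \prod_(y <- s) ('X - y%:P)].

Lemma Hval n s k : Good n s -> (k < n)%N ->
  exists2 m, 0 < m & (H n.+1).[nth 0 s k] = (-1) ^+ (n - k) * m.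
Proof.
case=> sz srt eH kn.
have lc := (Hsize n).2; set c := lead_coef (H n) in eH lc.
set x := nth 0 s k.
have es : s = take k s ++ x :: drop k.+1 s by rewrite -drop_nth ?cat_take_drop // sz.
have pw : pairwise <%R s by rewrite -sorted_pairwise //; exact: lt_trans.
move: pw; rewrite es pairwise_cat pairwise_cons /= => /and4P[ar _ ad _].
have hlt : forall y, y \in take k s -> y < x.
  move=> y yt; move/allrelP: ar => /(_ y x yt); apply; exact: mem_head.
have hgt : forall y, y \in drop k.+1 s -> x < y by move=> y yd; move/allP: ad => /(_ y yd).
set G := c *: (\prod_(y <- take k s) ('X - y%:P) * \prod_(y <- drop k.+1 s) ('X - y%:P)).
have fact : H n = ('X - x%:P) * G.
  rewrite eH {1}es big_cat big_cons /= /G -!mul_polyC.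
  move: (\prod_(y <- take k s) ('X - y%:P)) (\prod_(y <- drop k.+1 s) ('X - y%:P)) ('X - x%:P) c%:P => a b d e; ring.
have e0 : (H n).[x] = 0 by rewrite fact hornerM hornerXsubC subrr mul0r.
have e1 : (H n)^`().[x] = G.[x].
  by rewrite fact derivM derivXsubC mul1r hornerD hornerM hornerXsubC subrr mul0r addr0.
exists (c * (\prod_(y <- take k s) (x - y) * \prod_(y <- drop k.+1 s) (y - x))).
  apply: mulr_gt0 => //; apply: mulr_gt0; apply: prod_pos => y hy.
    by rewrite subr_gt0 hlt.
  by rewrite subr_gt0 hgt.
rewrite Hhorner e0 mulr0 sub0r e1 /G hornerZ hornerM !horner_prod.
rewrite (eq_bigr (fun y => x - y)); last by move=> y _; rewrite hornerXsubC.
rewrite [X in _ * (_ * X)](eq_bigr (fun y => x - y)); last by move=> y _; rewrite hornerXsubC.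
rewrite [X in _ * (_ * X)]prod_flip size_drop sz.
have -> : (n - k = (n - k.+1).+1)%N by lia.
rewrite exprS; ring.
Qed.

Lemma sorted_lt (s : seq R) i j : sorted <%R s -> (i < j)%N -> (j < size s)%N ->
  nth 0 s i < nth 0 s j.
Proof.
move=> srt ij js; apply: (sorted_ltn_nth lt_trans) => //; rewrite inE //.
exact: ltn_trans ij js.
Qed.

Lemma sorted_le (s : seq R) i j : sorted <%R s -> (i <= j)%N -> (j < size s)%N ->
  nth 0 s i <= nth 0 s j.
Proof.
move=> srt; rewrite leq_eqVlt => /orP[/eqP -> //|ij] js.
by apply: ltW; apply: sorted_lt.
Qed.

Lemma horner2 (p : {poly R}) y : size p = 2%N -> p.[y] = p`_0 + p`_1 * y.
Proof.
move=> sz; rewrite horner_coef sz !big_ord_recl big_ord0 /= expr0 expr1 mulr1 addr0.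
by [].
Qed.

Lemma sizeP (l : seq R) : size (\prod_(y <- l) ('X - y%:P)) = (size l).+1.
Proof. exact: size_prod_XsubC. Qed.

Lemma lcP (l : seq R) : lead_coef (\prod_(y <- l) ('X - y%:P)) = 1.
Proof. apply/monicP; exact: monic_prod_XsubC. Qed.

Lemma neqP (l : seq R) : \prod_(y <- l) ('X - y%:P) != 0.
Proof. apply: monic_neq0; exact: monic_prod_XsubC. Qed.

Lemma step n s : Good n s -> exists t, Good n.+1 t /\
  (forall i, (i < n)%N -> nth 0 t i < nth 0 s i /\ nth 0 s i < nth 0 t i.+1).
Proof.
move=> G; have [sz srt eH] := G.
have [szq lcq] := Hsize n.+1; set q := H n.+1 in szq lcq *.
have q0 : q != 0 by rewrite -size_poly_gt0 szq.
have ex : forall i, exists x, (i < n)%N ==>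
    [&& nth 0 s i < x, (i.+1 < n)%N ==> (x < nth 0 s i.+1) & root q x].
  move=> i; case: (ltnP i n) => iN; last by exists 0.
  case: (ltnP i.+1 n) => i1.
    have [m1 m1p e1] := Hval G iN; have [m2 m2p e2] := Hval G i1.
    have lt12 : nth 0 s i < nth 0 s i.+1 by apply: sorted_lt; rewrite ?sz.
    have [x hx rx] : {x | x \in `]nth 0 s i, nth 0 s i.+1[ & root q x}.
      apply: poly_ivtoo (ltW lt12) _.
      rewrite /q e1 e2; have -> : (n - i = (n - i.+1).+1)%N by lia.
      rewrite exprS -signr_odd; case: odd => /=; rewrite ?expr0 ?expr1;
      by rewrite !(mulN1r, mul1r, mulr1, mulrN, mulNr, opprK) oppr_lt0 mulr_gt0.
    exists x; rewrite in_itv /= in hx; case/andP: hx => -> ->; by rewrite rx.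
  have [m1 m1p e1] := Hval G iN.
  have [N hN] := poly_pinfty_gt_lc lcq.
  set M := Num.max N (nth 0 s i).
  have [x hx rx] : {x | x \in `]nth 0 s i, M[ & root q x}.
    apply: poly_ivtoo; first by rewrite le_max lexx orbT.
    rewrite pmulr_llt0; last by apply: lt_le_trans lcq (hN _ _); rewrite le_max lexx.
    rewrite /q e1; have -> : (n - i = 1)%N by lia.
    by rewrite expr1 mulN1r oppr_lt0.
  exists x; rewrite in_itv /= in hx; case/andP: hx => -> _; by rewrite rx.
pose f i := xchoose (ex i).
have hf : forall i, (i < n)%N ->
    [/\ nth 0 s i < f i, (i.+1 < n)%N -> f i < nth 0 s i.+1 & root q (f i)].
  move=> i iN; have /implyP/(_ iN)/and3P[a b c] := xchooseP (ex i).
  by split => // /(implyP b).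
pose r := mkseq f n.
have szr : size r = n by rewrite size_mkseq.
have nr : forall i, (i < n)%N -> nth 0 r i = f i by move=> i iN; rewrite nth_mkseq.
have srtr : sorted <%R r.
  apply/(sortedP 0) => i; rewrite szr => i1.
  rewrite !nr //; last exact: ltnW.
  have [_ h1 _] := hf i (ltnW i1); have [h2 _ _] := hf i.+1 i1.
  exact: lt_trans (h1 i1) h2.
have rgt : forall y, y \in r -> nth 0 s 0 < y.
  move=> y /(nthP 0) [i ir <-]; rewrite szr in ir; rewrite nr //.
  have [h _ _] := hf i ir; apply: le_lt_trans h.
  by apply: sorted_le; rewrite ?sz.
have rootr : all (root q) r.
  apply/allP => y /(nthP 0) [i ir <-]; rewrite szr in ir; rewrite nr //.
  by case: (hf i ir).
have ur : poly.uniq_roots (R:=R) r by rewrite uniq_rootsE (sorted_uniq lt_trans ltxx).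
have [q1 eq1] := uniq_roots_prod_XsubC rootr ur.
have q10 : q1 != 0 by apply: contraNneq q0 => e; rewrite eq1 e mul0r.
have szq1 : size q1 = 2%N.
  have := szq; rewrite eq1 size_mul ?neqP // sizeP szr.
  by rewrite addnS /= -[n.+2]add2n => /eqP; rewrite eqn_add2r => /eqP.
have lcq1 : lead_coef q = q1`_1.
  by rewrite {1}eq1 lead_coefM lcP mulr1 lead_coefE szq1.
have c1 : 0 < q1`_1 by rewrite -lcq1.
pose r0 := - q1`_0 / q1`_1.
have rr0 : root q r0.
  rewrite eq1 rootM; apply/orP; left; rewrite /root horner2 // /r0; apply/eqP.
  by field; rewrite gt_eqF.
have r0s : (0 < n)%N -> r0 < nth 0 s 0.
  move=> n0; have [m hm e] := Hval G n0.
  set P := \prod_(y <- r) (y - nth 0 s 0).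
  have Pp : 0 < P by apply: prod_pos => y /rgt; rewrite subr_gt0.
  have e' : q.[nth 0 s 0] = q1.[nth 0 s 0] * ((-1) ^+ n * P).
    rewrite {1}eq1 hornerM horner_prod.
    rewrite (eq_bigr (fun y => nth 0 s 0 - y)); last by move=> y _; rewrite hornerXsubC.
    by rewrite prod_flip szr.
  have em : m = q1.[nth 0 s 0] * P.
    rewrite subn0 in e; by rewrite -[m](signrMK n) -e e' mulrCA signrMK.
  have hq : 0 < q1.[nth 0 s 0] by rewrite -(pmulr_lgt0 _ Pp) -em.
  rewrite horner2 // in hq.
  by rewrite /r0 ltr_pdivrMr // -subr_gt0 opprK mulrC addrC.
pose t := r0 :: r.
have srtt : sorted <%R t.
  rewrite /t /= (path_sortedE lt_trans) srtr andbT; apply/allP => y yr.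
  have n0 : (0 < n)%N by move: yr => /(nthP 0) [i]; rewrite szr => ir _; exact: leq_ltn_trans ir.
  exact: lt_trans (r0s n0) (rgt _ yr).
have rt : all (root q) t by rewrite /= rr0 rootr.
have ut : poly.uniq_roots (R:=R) t by rewrite uniq_rootsE (sorted_uniq lt_trans ltxx).
have [q2 eq2] := uniq_roots_prod_XsubC rt ut.
have q20 : q2 != 0 by apply: contraNneq q0 => e; rewrite eq2 e mul0r.
have /size_poly1P[c c0 ec] : size q2 == 1%N.
  have := szq; rewrite eq2 size_mul ?neqP // sizeP /= szr.
  by rewrite addnS /= -[n.+2]add1n => /eqP; rewrite eqn_add2r.
have eqc : q = c *: \prod_(y <- t) ('X - y%:P) by rewrite {1}eq2 ec mul_polyC.
exists t; split.
  split => //; first by rewrite /= szr.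
  have lcc : lead_coef q = c by rewrite eqc lead_coefZ lcP mulr1.
  by rewrite -/q lcc.
move=> [|i] iN /=.
  split; first exact: r0s.
  by rewrite nr //; case: (hf 0 iN).
rewrite !nr //; last exact: ltnW.
have [_ h1 _] := hf i (ltnW iN); have [h2 _ _] := hf i.+1 iN.
by split => //; apply: h1.
Qed.

Lemma good_all n : exists s, Good n s.
Proof.
elim: n => [|n [s G]].
  by exists [::]; split => //=; rewrite big_nil lead_coef1 scale1r.
by have [t [Gt _]] := step G; exists t.
Qed.

Lemma good_rsz n s : Good n s -> real_simple_zeros (H n) s.
Proof.
case=> sz srt eH; split; last split => //.
  by rewrite -size_poly_gt0 (Hsize n).1.
exact: (sorted_uniq lt_trans ltxx).
Qed.

Lemma main n : exists (s t : seq R),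
    [/\ real_simple_zeros (H n) s, real_simple_zeros (H n.+1) t & interlaces t s].
Proof.
have [s G] := good_all n; have [t [Gt alt]] := step G.
exists s, t; split; [exact: good_rsz | exact: good_rsz |].
have [szs srts _] := G; have [szt srtt _] := Gt.
split; [|split].
- exists (nth 0 t 0); first by rewrite mem_nth // szt.
  move=> v /(nthP 0) [j]; rewrite szs => jn <-.
  have [h _] := alt 0%N (leq_ltn_trans (leq0n j) jn).
  apply: lt_le_trans h _; apply: sorted_le => //; by rewrite szs.
- move=> a b [/(nthP 0) [i ii <-] [/(nthP 0) [j jj <-] [ab _]]].
  rewrite szt in ii jj.
  have ij : (i < j)%N.
    rewrite ltnNge; apply/negP => ji.
    by move: ab; rewrite ltNge sorted_le ?szt.
  have iN : (i < n)%N by apply: leq_trans ij _; rewrite -ltnS.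
  have [h1 h2] := alt i iN.
  exists (nth 0 s i); first by rewrite mem_nth // szs.
  split => //; apply: lt_le_trans h2 _; apply: sorted_le => //; by rewrite szt.
- move=> a b [/(nthP 0) [i ii <-] [/(nthP 0) [j jj <-] [ab _]]].
  rewrite szs in ii jj.
  have ij : (i < j)%N.
    rewrite ltnNge; apply/negP => ji.
    by move: ab; rewrite ltNge sorted_le ?szs.
  have i1 : (i.+1 < n)%N by apply: leq_ltn_trans ij jj.
  have [_ h1] := alt i ii; have [h2 _] := alt i.+1 i1.
  exists (nth 0 t i.+1); first by rewrite mem_nth // szt.
  split => //; apply: lt_le_trans h2 _; apply: sorted_le => //; by rewrite szs.
Qed.
End S.

Unset Implicit Arguments.
Theorem theorem3p3 (R : realType) (phi psi : nat -> R)
    (hpsi : forall i : nat, (1 <= i)%N -> -2 < psi i) (n : nat) :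
  exists (s t : seq R),
    [/\ real_simple_zeros (Hpoly phi psi n) s,
        real_simple_zeros (Hpoly phi psi n.+1) t &
        interlaces t s].
Proof. exact: main. Qed.
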